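(* Let $X$ be a locally compact non-compact group. A filter $\xi$ on $X$ is coarse if and only if it is round and invariant.
   Context: A filter on $X$ is a nonempty family of subsets not containing $\emptyset$, stable under finite intersections and supersets. $\xi$ is round if for every $F\in\xi$ there are a neighborhood $V$ of the identity $e$ and $G\in\xi$ with $VG=\{xy:x\in V,y\in G\}\subset F$ (i.e. the sets $VG$ form a basis of $\xi$). $\xi$ is (left) invariant if $xF\in\xi$ for all $x\in X$ and $F\in\xi$. $\xi$ is coarse if for every $F\in\xi$ and every compact $K\subset X$ there is $G\in\xi$ with $KG\subset F$. *)

(* Defs.v *)
From mathcomp Require Import all_boot all_order.
From mathcomp Require Import all_classical all_reals all_analysis.
Set Implicit Arguments. Unset Strict Implicit. Unset Printing Implicit Defensive.
Local Open Scope classical_set_scope.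

Section Defs.
Variable X : topologicalType.

Definition is_topological_group (mul : X -> X -> X) (inv : X -> X) (e : X) :=
  [/\ (forall x y z, mul x (mul y z) = mul (mul x y) z),
      (forall x, mul e x = x),
      (forall x, mul (inv x) x = e),
      continuous (fun p : X * X => mul p.1 p.2) &
      continuous inv].


Definition set_mul (mul : X -> X -> X) (A B : set X) : set X :=
  [set z | exists x y, A x /\ B y /\ z = mul x y].

Definition is_filter (xi : set (set X)) :=
  [/\ (exists F, xi F), ~ xi set0,
      (forall F G, xi F -> xi G -> xi (F `&` G)) &
      (forall F G, xi F -> F `<=` G -> xi G)].

Definition round_filter (mul : X -> X -> X) (e : X) (xi : set (set X)) :=
  forall F, xi F -> exists V G, nbhs e V /\ xi G /\ set_mul mul V G `<=` F.

Definition invariant_filter (mul : X -> X -> X) (xi : set (set X)) :=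
  forall x F, xi F -> xi (set_mul mul [set x] F).

Definition coarse_filter (mul : X -> X -> X) (xi : set (set X)) :=
  forall F K, xi F -> compact K -> exists G, xi G /\ set_mul mul K G `<=` F.
End Defs.

(* Main.v *)
From HB Require Import structures.
Require Import Defs.
From mathcomp Require Import all_boot all_order.
From mathcomp Require Import all_classical all_reals all_analysis.
Local Open Scope classical_set_scope.
Section P.
Variables (X : topologicalType) (e : X).
Definition PX : Type := X.
HB.instance Definition _ := Topological.on PX.
HB.instance Definition _ := isPointed.Build PX e.
Lemma cc (A : set X) : compact A -> cover_compact A.
Proof. move=> cA. have := @compact_cover PX. move=> H.
have : @compact PX A by exact: cA.
by rewrite H.
Qed.
End P.
Section S.
Variable X : topologicalType.
Variables (mul : X -> X -> X) (inv : X -> X) (e : X).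
Hypothesis hG : is_topological_group mul inv e.
Lemma rinv x : mul x (inv x) = e.
Proof.
case: hG => A L I _ _.
set y := mul x (inv x).
have yy : mul y y = y by rewrite /y -A (A (inv x)) I L.
by rewrite -(L y) -(I y) -A yy.
Qed.
Lemma test k (V : set X) : nbhs e V -> nbhs k [set y | V (mul y (inv k))].
Proof.
case: hG => A L I C Ci.
move=> nV.
have := C (k, inv k). rewrite /=. move=> H.
have nV2 : nbhs (mul (k, inv k).1 (k, inv k).2) V by rewrite /= rinv.
case: (H V nV2) => [[P Q] /= [nP nQ] sub].
apply: filterS nP => y Py; apply: (sub (y, inv k)); split => //.
exact: nbhs_singleton.
Qed.
Lemma rid x : mul x e = x.
Proof.
case: hG => A L I _ _.
by rewrite -(I x) A rinv L.
Qed.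
End S.

Theorem proposition6p6 (X : topologicalType) (mul : X -> X -> X) (inv : X -> X) (e : X)
  (hG : is_topological_group mul inv e) (hH : hausdorff_space X)
  (hlc : locally_compact [set: X]) (hnc : ~ compact [set: X])
  (xi : set (set X)) (hxi : is_filter xi) :
  coarse_filter mul xi <-> (round_filter mul e xi /\ invariant_filter mul xi).
Proof.
have [A L I _ _] := hG.
have [[F0 xF0] n0 xI xS] := hxi.
split.
  move=> co; split.
    move=> F xF.
    have [U W [cU _]] := hlc e Logic.I.
    have nU : nbhs e U.
      move: W; rewrite /within /prop_near1 nbhs_simpl /= => W.
      by apply: filterS W => y; apply.
    have [G [xG sG]] := co F U xF cU.
    by exists U, G.
  move=> x F xF.
  have [G [xG sG]] := co F [set inv x] xF (@compact_set1 X (inv x)).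
  apply: (xS _ _ xG) => g Gg.
  exists x, (mul (inv x) g); split => //; split.
    by apply: sG; exists (inv x), g.
  by rewrite A (@rinv _ _ _ _ hG) L.
move=> [ro iv] F K xF cK.
have [V [G [nV [xG sG]]]] := ro F xF.
have lem : forall s : seq X, exists G', xi G' /\
    forall i, i \in s -> forall g, G' g -> G (mul i g).
  elim=> [|i s [G' [xG' hG']]].
    by exists F0; split.
  exists (G' `&` set_mul mul [set inv i] G); split.
    by apply: xI => //; exact: iv.
  move=> j; rewrite in_cons => /orP [/eqP -> | js] g [G'g H]; last exact: hG'.
  case: H => a [b [/= -> [Gb ->]]].
  by rewrite A (@rinv _ _ _ _ hG) L.
have {}cK := @cc X e K cK.
have op : forall i, K i -> open (interior [set y | V (mul y (inv i))]).
  by move=> i _; exact: open_interior.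
have cov : K `<=` cover K (fun k => interior [set y | V (mul y (inv k))]).
  move=> k Kk; exists k => //.
  exact: (@test _ _ _ _ hG).
have [D' D'K KD'] := cK X K _ op cov.
have [G' [xG' hG']] := lem (finmap.enum_fset D').
exists G'; split => //.
move=> z [y [g [Ky [G'g ->]]]].
have [i D'i fi] := KD' y Ky.
apply: sG; exists (mul y (inv i)), (mul i g); split.
  exact: interior_subset fi.
split; first by apply: hG' => //.
by rewrite -A (A (inv i)) I L.
Qed.
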